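(* Assume $t_m=1$. Let $y\in\mathbb Z_\beta^+$ have β-expansion $y_ny_{n-1}\cdots y_k0^k\bullet$ with $y_k\ne0$, $k\in\mathbb N$. Then $y-{\rm pred}(y)=T_\beta^{k'}(1)$, where $k'\in\{0,1,\dots,m-1\}$ satisfies $k'\equiv k\pmod m$.
   Context: $\beta>1$ is a simple Parry number with $d_\beta(1)=t_1\cdots t_{m-1}t_m$ ($m\ge2$, $t_1\ge1$, $t_m\ge1$, satisfying the Parry condition). The β-expansion of $x>0$ is the greedy expansion $x=\sum_{i\le k}x_i\beta^i$; we write $x=x_k\cdots x_0\bullet$ when $x_i=0$ for $i<0$, and such $x$ (together with $0$) form $\mathbb Z_\beta^+$, the non-negative β-integers. A finite string $x_k\cdots x_0$ over $\{0,\dots,\lceil\beta\rceil-1\}$ is the β-expansion of a β-integer iff each suffix $x_ix_{i-1}\cdots x_0$ ($i\le k$) is lexicographically strictly smaller than $d_\beta(1)$. $\mathbb Z_\beta=\mathbb Z_\beta^+\cup(-\mathbb Z_\beta^+)$, ${\rm pred}(x)=\max\{y\in\mathbb Z_\beta: y<x\}$. $T_\beta(x)=\beta x\bmod 1$, and $T_\beta^i(1)=\sum_{j=i+1}^m t_j\beta^{i-j}$ for $0\le i\le m-1$. *)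

(* Defs.v *)
From Stdlib Require Import Reals Lra ZArith.
Open Scope R_scope.

Definition floorR (x : R) : Z := Int_part x.

Definition Tb (beta x : R) : R := beta * x - IZR (floorR (beta * x)).

Definition Tn (beta : R) (n : nat) (x : R) : R := Nat.iter n (Tb beta) x.

(* i-th digit t_i (i >= 1) of the Renyi expansion d_beta(1) = t_1 t_2 ...:
   t_i = floor(beta * T_beta^{i-1}(1)). *)
Definition renyi_digit (beta : R) (i : nat) : Z :=
  floorR (beta * Tn beta (i - 1) 1).

(* beta is a simple Parry number with d_beta(1) = t_1 ... t_m, t_m >= 1:
   the greedy expansion of 1 stops after exactly m digits. *)
Definition simple_parry_len (beta : R) (m : nat) : Prop :=
  1 < beta /\ (1 <= m)%nat /\ Tn beta m 1 = 0 /\ (1 <= renyi_digit beta m)%Z.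

(* Greedy beta-expansion of x > 0 whose leading position is n
   (i.e. beta^n <= x < beta^(n+1)): the digit at position i <= n is
   x_i = floor(beta * T_beta^{n-i}(x / beta^(n+1))). *)
Definition top_pos (beta x : R) (n : nat) : Prop :=
  beta ^ n <= x < beta ^ (S n).

Definition bdigit (beta x : R) (n i : nat) : Z :=
  floorR (beta * Tn beta (n - i) (x / beta ^ (S n))).

(* x is a non-negative beta-integer: x = 0, or x > 0 has leading position
   n >= 0 and all digits at negative positions vanish, i.e. the remainder
   T_beta^{n+1}(x / beta^(n+1)) is 0. *)
Definition in_Zbeta_plus (beta x : R) : Prop :=
  x = 0 \/ exists n : nat, top_pos beta x n /\ Tn beta (S n) (x / beta ^ (S n)) = 0.

Definition in_Zbeta (beta x : R) : Prop :=
  in_Zbeta_plus beta x \/ in_Zbeta_plus beta (- x).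

Definition is_pred (beta y p : R) : Prop :=
  in_Zbeta beta p /\ p < y /\ forall z, in_Zbeta beta z -> z < y -> z <= p.

(* Main.v *)
Require Import Defs.
From Stdlib Require Import Reals Lra Lia ZArith.
Open Scope R_scope.

Lemma floor_spec r : IZR (floorR r) <= r < IZR (floorR r) + 1.
Proof. unfold floorR. destruct (base_Int_part r). lra. Qed.

Lemma floor_unique z r : IZR z <= r < IZR z + 1 -> floorR r = z.
Proof.
  intros [H1 H2]. destruct (floor_spec r) as [H3 H4].
  assert (A : (floorR r < z + 1)%Z) by (apply lt_IZR; rewrite plus_IZR; simpl; lra).
  assert (B : (z < floorR r + 1)%Z) by (apply lt_IZR; rewrite plus_IZR; simpl; lra).
  lia.
Qed.

Lemma floor_mono x y : x <= y -> (floorR x <= floorR y)%Z.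
Proof.
  intros H. destruct (floor_spec x), (floor_spec y).
  assert (A : (floorR x < floorR y + 1)%Z) by (apply lt_IZR; rewrite plus_IZR; simpl; lra).
  lia.
Qed.

Lemma floor_nonneg x : 0 <= x -> (0 <= floorR x)%Z.
Proof.
  intros H. destruct (floor_spec x).
  assert (A : (-1 < floorR x)%Z) by (apply lt_IZR; simpl; lra). lia.
Qed.

Lemma Tb_range beta x : 0 <= Tb beta x < 1.
Proof. unfold Tb. destruct (floor_spec (beta * x)). lra. Qed.

Lemma Tn_succ_r beta K u : Tn beta (S K) u = Tn beta K (Tb beta u).
Proof.
  unfold Tn. induction K; simpl; auto. simpl in IHK. rewrite IHK. reflexivity.
Qed.

Lemma Tn_add beta a b x : Tn beta (a + b) x = Tn beta a (Tn beta b x).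
Proof. unfold Tn. induction a; simpl; auto. rewrite IHa. reflexivity. Qed.

Lemma Tn_S beta K u : Tn beta (S K) u = Tb beta (Tn beta K u).
Proof. reflexivity. Qed.

Definition InS beta K u := 0 <= u < 1 /\ Tn beta K u = 0.

Lemma decomp beta u : 0 < beta -> u = (IZR (floorR (beta * u)) + Tb beta u) / beta.
Proof. intros. unfold Tb. field. lra. Qed.

Lemma construct beta e w : 0 < beta -> (0 <= e)%Z -> 0 <= w < 1 -> IZR e + w < beta ->
  0 <= (IZR e + w)/beta < 1 /\ floorR (beta * ((IZR e + w)/beta)) = e /\
  Tb beta ((IZR e + w)/beta) = w.
Proof.
  intros hb he hw hl. apply IZR_le in he.
  assert (E : beta * ((IZR e + w)/beta) = IZR e + w) by (field; lra).
  assert (F : floorR (beta * ((IZR e + w)/beta)) = e) by (rewrite E; apply floor_unique; lra).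
  split; [|split; auto].
  - split.
    + apply Rmult_le_pos; [lra|]. left; apply Rinv_0_lt_compat; lra.
    + apply (Rmult_lt_reg_l beta); auto. rewrite E. lra.
  - unfold Tb. rewrite F, E. ring.
Qed.

Lemma S_construct beta K w e : 0 < beta -> InS beta K w -> (0 <= e)%Z -> IZR e + w < beta ->
  InS beta (S K) ((IZR e + w)/beta).
Proof.
  intros hb [hw hT] he hl. destruct (construct beta e w hb he hw hl) as [A [B C]].
  split; auto. rewrite Tn_succ_r, C. auto.
Qed.

Lemma S_T beta K u : InS beta (S K) u -> InS beta K (Tb beta u).
Proof. intros [h1 h2]. split. apply Tb_range. rewrite <- Tn_succ_r; auto. Qed.

Lemma Tb_small beta x : 0 < beta -> 0 <= x -> beta * x < 1 -> Tb beta x = beta * x.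
Proof.
  intros h0 h1 h2. unfold Tb. rewrite (floor_unique 0); simpl. ring. split.
  apply Rmult_le_pos; lra. lra.
Qed.

Lemma Rdiv_le_0_compat a b : 0 <= a -> 0 < b -> 0 <= a / b.
Proof. intros. unfold Rdiv. apply Rmult_le_pos; auto. left; apply Rinv_0_lt_compat; auto. Qed.

Lemma Tn_small beta j x : 1 < beta -> 0 <= x -> beta ^ j * x < 1 -> Tn beta j x = beta ^ j * x.
Proof.
  intros hb hx. induction j; intros h.
  - simpl. ring.
  - rewrite Tn_S. assert (P : 0 < beta ^ j) by (apply pow_lt; lra).
    assert (h' : beta ^ j * x < 1).
    { simpl in h. assert (beta ^ j * x <= beta * (beta ^ j * x)).
      { assert (0 <= beta ^ j * x) by (apply Rmult_le_pos; lra). nra. } lra. }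
    rewrite IHj by auto. rewrite Tb_small; try lra.
    + simpl. ring.
    + apply Rmult_le_pos; lra.
    + simpl in h. lra.
Qed.

Lemma Tn_nonneg beta j x : 0 <= x -> 0 <= Tn beta j x.
Proof. intros. destruct j; [simpl; auto|]. rewrite Tn_S. apply Tb_range. Qed.

Lemma Tn_le beta j x : 0 < beta -> 0 <= x -> Tn beta j x <= beta ^ j * x.
Proof.
  intros hb hx. induction j.
  - simpl. lra.
  - rewrite Tn_S. unfold Tb.
    pose proof (floor_nonneg (beta * Tn beta j x) (Rmult_le_pos _ _ (Rlt_le _ _ hb) (Tn_nonneg beta j x hx))).
    apply IZR_le in H. simpl. simpl in H. nra.
Qed.

Section Parry.
Variable beta : R.
Variable m : nat.
Hypothesis hb : 1 < beta.
Hypothesis hm : (1 <= m)%nat.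
Hypothesis hTm : Tn beta m 1 = 0.
Hypothesis hr : renyi_digit beta m = 1%Z.

Definition a j := Tn beta j 1.

Lemma a0 : a 0 = 1.
Proof. reflexivity. Qed.

Lemma a_range j : (1 <= j)%nat -> 0 <= a j < 1.
Proof. intros. destruct j; [lia|]. unfold a. rewrite Tn_S. apply Tb_range. Qed.

Lemma a_le1 j : 0 <= a j <= 1.
Proof. destruct j. rewrite a0; lra. pose proof (a_range (S j) ltac:(lia)). lra. Qed.

Lemma a_pos j : (j < m)%nat -> 0 < a j.
Proof.
  intros hj. destruct (a_le1 j) as [h _]. destruct h as [h|h]; auto. exfalso.
  assert (Z : forall i, a (i + j) = 0).
  { induction i. simpl. auto. change (a (S (i + j)) = 0). unfold a in *. rewrite Tn_S, IHi. unfold Tb.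
    rewrite Rmult_0_r. rewrite (floor_unique 0 0) by (simpl; lra). simpl. ring. }
  unfold renyi_digit in hr. specialize (Z (m - 1 - j)%nat).
  replace (m - 1 - j + j)%nat with (m - 1)%nat in Z by lia. unfold a in Z.
  rewrite Z, Rmult_0_r in hr. rewrite (floor_unique 0 0) in hr by (simpl; lra). discriminate.
Qed.

Lemma a_last : beta * a (m - 1) = 1.
Proof.
  unfold renyi_digit in hr. unfold a.
  replace m with (S (m - 1)) in hTm by lia. rewrite Tn_S in hTm. unfold Tb in hTm.
  rewrite hr in hTm. simpl in hTm. lra.
Qed.

Lemma a_succ j : a (S j) = beta * a j - IZR (floorR (beta * a j)).
Proof. reflexivity. Qed.



Lemma bpos : 0 < beta.
Proof. lra. Qed.

Lemma maxS K : forall j, (j < m)%nat ->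
  InS beta K (a j - a ((j+K) mod m) / beta ^ K) /\ a j - a ((j+K) mod m)/beta^K < a j /\
  forall w, InS beta K w -> w < a j -> w <= a j - a ((j+K) mod m)/beta^K.
Proof.
  induction K; intros j hj.
  - rewrite Nat.add_0_r, Nat.mod_small by auto.
    replace (a j - a j / beta ^ 0) with 0 by (simpl; field).
    pose proof (a_pos j hj).
    split; [split; [lra|reflexivity]|split; [lra|]].
    intros w [_ hw] _. unfold Tn in hw; simpl in hw. lra.
  - assert (PK : 0 < beta ^ K) by (apply pow_lt; lra).
    assert (PSK : beta ^ S K = beta * beta ^ K) by reflexivity.
    destruct (Nat.eq_dec (S j) m) as [E|E].
    + assert (hj1 : j = (m - 1)%nat) by lia.
      assert (Aj : beta * a j = 1) by (subst j; apply a_last).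
      destruct (IHK 0%nat ltac:(lia)) as [HS [Hlt Hmax]].
      rewrite a0, Nat.add_0_l in *.
      assert (I : ((j + S K) mod m = K mod m)%nat).
      { replace (j + S K)%nat with (K + 1 * m)%nat by lia. apply Nat.Div0.mod_add. }
      rewrite I.
      set (q := 1 - a (K mod m) / beta ^ K) in *.
      assert (B : a j - a (K mod m) / beta ^ S K = (IZR 0 + q) / beta).
      { assert (Ej : a j = 1 / beta) by (apply (Rmult_eq_reg_l beta); [rewrite Aj; field|]; lra).
        unfold q. rewrite PSK, Ej. simpl. field. lra. }
      rewrite B. destruct HS as [[q0 q1] qT].
      split; [|split].
      * apply S_construct; try lra. split; auto. lia.
      * simpl. apply (Rmult_lt_reg_l beta); try lra. rewrite Aj. field_simplify; lra.
      * intros w Hw hw. assert (H : beta * w < 1) by nra.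
        assert (Tw : Tb beta w = beta * w).
        { apply Tb_small; try lra. destruct Hw as [[w0 _] _]; auto. }
        pose proof (S_T _ _ _ Hw) as HT. rewrite Tw in HT.
        specialize (Hmax _ HT H). simpl.
        apply (Rmult_le_reg_l beta); try lra. field_simplify; lra.
    + assert (hj' : (S j < m)%nat) by lia.
      destruct (IHK (S j) hj') as [HS [Hlt Hmax]].
      assert (I : ((S j + K) = j + S K)%nat) by lia. rewrite I in *.
      set (c := a ((j + S K) mod m)) in *.
      set (b' := a (S j) - c / beta ^ K) in *.
      set (t := floorR (beta * a j)).
      assert (t0 : (0 <= t)%Z).
      { apply floor_nonneg. pose proof (a_le1 j). nra. }
      assert (Hsj : a (S j) = beta * a j - IZR t) by reflexivity.
      assert (B : a j - c / beta ^ S K = (IZR t + b') / beta).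
      { unfold b'. rewrite Hsj, PSK. field. lra. }
      rewrite B. pose proof (a_le1 j). destruct HS as [[q0 q1] qT].
      split; [|split].
      * apply S_construct; try lra. split; auto. auto. nra.
      * apply (Rmult_lt_reg_l beta); try lra. field_simplify; try lra.
      * intros w Hw hw. destruct Hw as [[w0 w1] wT].
        assert (Hw : InS beta (S K) w) by (split; auto).
        pose proof (S_T _ _ _ Hw) as HT.
        set (e := floorR (beta * w)).
        assert (et : (e <= t)%Z) by (apply floor_mono; nra).
        assert (Dw : w = (IZR e + Tb beta w) / beta) by (apply decomp; lra).
        destruct (Z.eq_dec e t) as [Et|Et].
        -- assert (Tbw : Tb beta w < a (S j)).
           { unfold Tb. fold e. rewrite Et, Hsj. nra. }
           specialize (Hmax _ HT Tbw). rewrite Dw, Et.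
           apply Rmult_le_compat_r. left; apply Rinv_0_lt_compat; lra. lra.
        -- assert (et' : (e + 1 <= t)%Z) by lia. apply IZR_le in et'.
           rewrite plus_IZR in et'. simpl in et'.
           pose proof (Tb_range beta w).
           rewrite Dw. apply Rmult_le_compat_r. left; apply Rinv_0_lt_compat; lra. lra.
Qed.



Lemma Mlem K : forall s u, 0 <= u < 1 -> Tn beta (S s) u = 0 -> floorR (beta * Tn beta s u) <> 0%Z ->
  InS beta (S s + K) (u - a (K mod m) / beta ^ (S s + K)) /\
  forall v, InS beta (S s + K) v -> v < u -> v <= u - a (K mod m) / beta ^ (S s + K).
Proof.
  assert (hK : (K mod m < m)%nat) by (apply Nat.mod_upper_bound; lia).
  pose proof (a_pos _ hK) as aP. pose proof (a_le1 (K mod m)) as aL.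
  set (aK := a (K mod m)) in *.
  assert (PK : 0 < beta ^ K) by (apply pow_lt; lra).
  assert (PK1 : 1 <= beta ^ K) by (apply pow_R1_Rle; lra).
  induction s; intros u [u0 u1] HT HD.
  - change (S 0 + K)%nat with (S K).
    assert (PSK : beta ^ S K = beta * beta ^ K) by reflexivity.
    destruct (maxS K 0%nat ltac:(lia)) as [HS [Hlt Hmax]].
    rewrite a0, Nat.add_0_l in *. fold aK in HS, Hlt, Hmax.
    set (q := 1 - aK / beta ^ K) in *.
    set (d := floorR (beta * u)).
    assert (Tu : Tb beta u = 0) by exact HT.
    assert (Du : u = (IZR d + 0) / beta) by (rewrite <- Tu; apply decomp; lra).
    assert (d0 : (0 <= d)%Z) by (apply floor_nonneg; nra).
    assert (d1 : (1 <= d)%Z) by (unfold d; simpl in HD; lia).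
    assert (E : u - aK / beta ^ S K = (IZR (d - 1) + q) / beta).
    { rewrite Du at 1. unfold q. rewrite minus_IZR, PSK. simpl. field. lra. }
    rewrite E. destruct HS as [[q0 q1] qT].
    assert (dlt : IZR d <= beta * u) by (pose proof (floor_spec (beta * u)); unfold d; lra).
    split.
    + apply S_construct; try lra. split; auto. lia. rewrite minus_IZR. simpl. nra.
    + intros v Hv hv. destruct Hv as [[v0 v1] vT].
      assert (Hv : InS beta (S K) v) by (split; auto).
      pose proof (S_T _ _ _ Hv) as HTv. pose proof (Tb_range beta v) as Tr.
      set (e := floorR (beta * v)).
      assert (ed : (e <= d)%Z) by (apply floor_mono; nra).
      assert (Dv : v = (IZR e + Tb beta v) / beta) by (apply decomp; lra).
      destruct (Z.eq_dec e d) as [Ed|Ed].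
      * exfalso. rewrite Ed in Dv.
        assert ((IZR d + 0)/beta <= (IZR d + Tb beta v)/beta).
        { apply Rmult_le_compat_r. left; apply Rinv_0_lt_compat; lra. lra. }
        lra.
      * assert (ed' : (e <= d - 1)%Z) by lia. apply IZR_le in ed'.
        specialize (Hmax _ HTv (proj2 Tr)).
        rewrite Dv. apply Rmult_le_compat_r. left; apply Rinv_0_lt_compat; lra. lra.
  - set (u' := Tb beta u).
    assert (HT' : Tn beta (S s) u' = 0) by (unfold u'; rewrite <- Tn_succ_r; auto).
    assert (HD' : floorR (beta * Tn beta s u') <> 0%Z) by (unfold u'; rewrite <- Tn_succ_r; auto).
    destruct (IHs u' (Tb_range beta u) HT' HD') as [HS Hmax].
    change (S (S s) + K)%nat with (S (S s + K)).
    assert (PSK : beta ^ S (S s + K) = beta * beta ^ (S s + K)) by reflexivity.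
    assert (PN : 0 < beta ^ (S s + K)) by (apply pow_lt; lra).
    set (c' := aK / beta ^ (S s + K)) in *.
    assert (c'0 : 0 < c') by (unfold c'; apply Rdiv_lt_0_compat; lra).
    set (d := floorR (beta * u)).
    assert (Du : u = (IZR d + u') / beta) by (apply decomp; lra).
    assert (d0 : (0 <= d)%Z) by (apply floor_nonneg; nra).
    assert (E : u - aK / beta ^ S (S s + K) = (IZR d + (u' - c')) / beta).
    { rewrite Du at 1. unfold c'. rewrite PSK. field. lra. }
    rewrite E.
    assert (bu : IZR d + u' < beta).
    { assert (beta * u = IZR d + u') by (rewrite Du; field; lra). nra. }
    split.
    + apply S_construct; try lra; auto.
    +
      assert (Lu : c' <= u').
      { pose proof (Tn_le beta s u' ltac:(lra) (proj1 (Tb_range beta u))) as Le.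
        set (D := floorR (beta * Tn beta s u')) in *.
        pose proof (floor_spec (beta * Tn beta s u')) as FS. fold D in FS.
        assert (D0 : (0 <= D)%Z) by (apply floor_nonneg; pose proof (Tn_nonneg beta s u' (proj1 (Tb_range beta u))); nra).
        assert (D1 : (1 <= D)%Z) by lia. apply IZR_le in D1.
        assert (Ps : 0 < beta ^ s) by (apply pow_lt; lra).
        assert (G : 1 <= beta ^ S s * u') by (simpl; nra).
        unfold c'. rewrite pow_add.
        apply (Rmult_le_reg_l (beta ^ S s * beta ^ K)). 
        { apply Rmult_lt_0_compat; auto. apply pow_lt; lra. }
        assert (0 < beta ^ S s) by (apply pow_lt; lra).
        replace (beta ^ S s * beta ^ K * (aK / (beta ^ S s * beta ^ K))) with aK by (field; lra).
        assert (1 * beta ^ K <= (beta ^ S s * u') * beta ^ K) by (apply Rmult_le_compat_r; lra).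
        nra. }
      intros v Hv hv. destruct Hv as [[v0 v1] vT].
      assert (Hv : InS beta (S (S s + K)) v) by (split; auto).
      pose proof (S_T _ _ _ Hv) as HTv. pose proof (Tb_range beta v) as Tr.
      set (e := floorR (beta * v)).
      assert (ed : (e <= d)%Z) by (apply floor_mono; nra).
      assert (Dv : v = (IZR e + Tb beta v) / beta) by (apply decomp; lra).
      destruct (Z.eq_dec e d) as [Ed|Ed].
      * rewrite Ed in Dv.
        assert (Tl : Tb beta v < u').
        { assert (beta * v < beta * u) by nra.
          assert (beta * v = IZR d + Tb beta v) by (rewrite Dv at 1; field; lra).
          assert (beta * u = IZR d + u') by (rewrite Du at 1; field; lra). lra. }
        specialize (Hmax _ HTv Tl).
        rewrite Dv. apply Rmult_le_compat_r. left; apply Rinv_0_lt_compat; lra. lra.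
      * assert (ed' : (e <= d - 1)%Z) by lia. apply IZR_le in ed'. rewrite minus_IZR in ed'.
        rewrite Dv. apply Rmult_le_compat_r. left; apply Rinv_0_lt_compat; lra. lra.
Qed.

End Parry.

Lemma S_Zplus beta N : 1 < beta -> forall x, InS beta N x -> in_Zbeta_plus beta (beta ^ N * x).
Proof.
  intros hb. induction N; intros x [[x0 x1] xT].
  - left. unfold Tn in xT; simpl in xT. subst. ring.
  - assert (P : 0 < beta ^ N) by (apply pow_lt; lra).
    destruct (Rle_lt_dec 1 (beta * x)) as [H|H].
    + right. exists N. split.
      * unfold top_pos. simpl.
        assert (beta ^ N * 1 <= beta ^ N * (beta * x)) by (apply Rmult_le_compat_l; lra).
        assert ((beta * beta ^ N) * x < (beta * beta ^ N) * 1) by (apply Rmult_lt_compat_l; nra).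
        split; nra.
      * replace (beta ^ S N * x / beta ^ S N) with x; auto.
        field. apply Rgt_not_eq. apply pow_lt; lra.
    + assert (Tx : Tb beta x = beta * x) by (apply Tb_small; lra).
      assert (HS : InS beta N (beta * x)).
      { split. split; nra. rewrite <- Tx, <- Tn_succ_r. auto. }
      specialize (IHN _ HS). replace (beta ^ S N * x) with (beta ^ N * (beta * x)) by (simpl; ring).
      auto.
Qed.

Lemma Zplus_S beta N z n' : 1 < beta -> top_pos beta z n' ->
  Tn beta (S n') (z / beta ^ S n') = 0 -> z < beta ^ N -> InS beta N (z / beta ^ N).
Proof.
  intros hb [t1 t2] tT hz.
  assert (Pn : 0 < beta ^ n') by (apply pow_lt; lra).
  assert (PN : 0 < beta ^ N) by (apply pow_lt; lra).
  assert (lt : (n' < N)%nat).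
  { destruct (Nat.lt_ge_cases n' N) as [h|h]; auto.
    pose proof (Rle_pow beta N n' ltac:(lra) h). lra. }
  set (j := (N - S n')%nat).
  assert (EN : beta ^ N = beta ^ j * beta ^ S n') by (rewrite <- pow_add; f_equal; unfold j; lia).
  assert (PS : 0 < beta ^ S n') by (apply pow_lt; lra).
  assert (Pj : 0 < beta ^ j) by (apply pow_lt; lra).
  assert (Ej : beta ^ j * (z / beta ^ N) = z / beta ^ S n') by (rewrite EN; field; lra).
  split.
  - split. apply Rdiv_le_0_compat; lra.
    apply (Rmult_lt_reg_l (beta ^ N)); auto. replace (beta ^ N * (z / beta ^ N)) with z by (field; lra). lra.
  - assert (EN2 : Tn beta N (z / beta ^ N) = Tn beta (S n') (Tn beta j (z / beta ^ N)))
      by (rewrite <- Tn_add; f_equal; unfold j; lia).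
    rewrite EN2. rewrite (Tn_small beta j); auto.
    + rewrite Ej. auto.
    + apply Rdiv_le_0_compat; lra.
    + rewrite Ej. apply (Rmult_lt_reg_l (beta ^ S n')); auto.
      replace (beta ^ S n' * (z / beta ^ S n')) with z by (field; lra). lra.
Qed.

Theorem lemma3p21 (beta : R) (m : nat) (y : R) (n k : nat) :
  (2 <= m)%nat ->
  simple_parry_len beta m ->
  renyi_digit beta m = 1%Z ->
  top_pos beta y n ->
  Tn beta (S n) (y / beta ^ (S n)) = 0 ->
  (k <= n)%nat ->
  bdigit beta y n k <> 0%Z ->
  (forall i : nat, (i < k)%nat -> bdigit beta y n i = 0%Z) ->
  is_pred beta y (y - Tn beta (k mod m) 1).
Proof.
  intros hm2 [hb [hm [hTm _]]] hr Htop Hint hkn Hyk Hzero.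
  destruct Htop as [y0 y1].
  assert (Pn : 0 < beta ^ n) by (apply pow_lt; lra).
  assert (PSn : 0 < beta ^ S n) by (apply pow_lt; lra).
  assert (Pn1 : 1 <= beta ^ n) by (apply pow_R1_Rle; lra).
  set (u := y / beta ^ S n) in *.
  assert (ur : 0 <= u < 1).
  { split. apply Rdiv_le_0_compat; lra.
    apply (Rmult_lt_reg_l (beta ^ S n)); auto. unfold u.
    replace (beta ^ S n * (y / beta ^ S n)) with y by (field; lra). lra. }
  set (w := Tn beta (S (n - k)) u).
  assert (Z : forall t, (t <= k)%nat -> Tn beta t w = beta ^ t * w).
  { induction t; intros ht.
    - simpl. unfold Tn; simpl. ring.
    - rewrite Tn_S, IHt by lia.
      specialize (Hzero (k - 1 - t)%nat ltac:(lia)). unfold bdigit in Hzero. fold u in Hzero.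
      replace (n - (k - 1 - t))%nat with (t + S (n - k))%nat in Hzero by lia.
      rewrite Tn_add in Hzero. fold w in Hzero. rewrite IHt in Hzero by lia.
      unfold Tb. rewrite Hzero. simpl. ring. }
  assert (W0 : w = 0).
  { specialize (Z k (le_n k)). unfold w in Z at 1. rewrite <- Tn_add in Z.
    replace (k + S (n - k))%nat with (S n) in Z by lia. rewrite Hint in Z.
    assert (0 < beta ^ k) by (apply pow_lt; lra). nra. }
  assert (HD : floorR (beta * Tn beta (n - k) u) <> 0%Z) by exact Hyk.
  destruct (Mlem beta m hb hm hTm hr k (n - k) u ur W0 HD) as [HS Hmax].
  replace (S (n - k) + k)%nat with (S n) in HS, Hmax by lia.
  unfold a in HS, Hmax.
  set (A := Tn beta (k mod m) 1) in *.
  assert (hK : (k mod m < m)%nat) by (apply Nat.mod_upper_bound; lia).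
  pose proof (a_pos beta m hm hr (k mod m) hK) as AP.
  pose proof (a_le1 beta m hm (k mod m)) as AL. unfold a in AP, AL. fold A in AP, AL.
  assert (EU : u - A / beta ^ S n = (y - A) / beta ^ S n) by (unfold u; field; lra).
  rewrite EU in HS, Hmax.
  split; [|split].
  - left. pose proof (S_Zplus beta (S n) hb _ HS) as H.
    replace (beta ^ S n * ((y - A) / beta ^ S n)) with (y - A) in H by (field; lra). exact H.
  - lra.
  - intros z Hz hz. destruct Hz as [Hz|Hz].
    + destruct Hz as [z0|[n' [Ht Ht']]]. lra.
      assert (HzS : InS beta (S n) (z / beta ^ S n)) by (apply (Zplus_S beta (S n) z n'); auto; lra).
      assert (zu : z / beta ^ S n < u).
      { unfold u. apply Rmult_lt_compat_r; auto. apply Rinv_0_lt_compat; auto. }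
      specialize (Hmax _ HzS zu).
      apply (Rmult_le_compat_l (beta ^ S n)) in Hmax; [|lra].
      replace (beta ^ S n * (z / beta ^ S n)) with z in Hmax by (field; lra).
      replace (beta ^ S n * ((y - A) / beta ^ S n)) with (y - A) in Hmax by (field; lra). auto.
    + destruct Hz as [z0|[n' [[t1 t2] _]]]. lra.
      assert (0 < beta ^ n') by (apply pow_lt; lra). lra.
Qed.
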